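(* Let $G$ be a full Frobenius group of finite Morley rank with proper full Frobenius complement $B$. Then every finite subgroup and every soluble subgroup of $G$ is contained in some conjugate of $B$. In particular, $G$ has no non-trivial finite normal subgroup and no non-trivial soluble normal subgroup.
   Context: A subgroup $B$ of a group $G$ is malnormal if $B\cap B^g=\{1\}$ for all $g\in G\setminus B$. A full Frobenius complement of a group $G$ of finite Morley rank is a definable malnormal subgroup of $G$ whose conjugates $B^g$ ($g\in G$) cover $G$. A group $G$ of finite Morley rank is a full Frobenius group if it has a proper full Frobenius complement $B$; the conjugates of $B$ are then called the Borel subgroups of $G$. *)

(* Defs.v *)
From Stdlib Require List.
From mathcomp Require Import all_boot.
Set Implicit Arguments.
Unset Strict Implicit.
Unset Printing Implicit Defensive.

(** A group of finite Morley rank is presented (as in Borovik–Nesin, "Groups of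
  Finite Morley Rank", Ch. 4) as a group [G] together with a universe of
  definable sets (subsets of the powers [G^n], with parameters) and a rank
  function with values in [nat] satisfying the Borovik–Poizat rank axioms. *)

Definition tset (G : Type) (n : nat) := ('I_n -> G) -> Prop.

Definition lpart (G : Type) n m (x : 'I_(n + m) -> G) : 'I_n -> G :=
  fun j => x (lshift m j).
Definition rpart (G : Type) n m (x : 'I_(n + m) -> G) : 'I_m -> G :=
  fun k => x (rshift n k).
Definition tcat (G : Type) n m (a : 'I_n -> G) (b : 'I_m -> G) : 'I_(n + m) -> G :=
  fun i => match split i with inl j => a j | inr k => b k end.

Definition nonempty {T : Type} (X : T -> Prop) := exists x, X x.
Definition finite_set {T : Type} (X : T -> Prop) :=
  exists s : seq T, forall x, X x -> List.In x s.
Definition infinite_set {T : Type} (X : T -> Prop) := ~ finite_set X.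
Definition card_gt {T : Type} (X : T -> Prop) (m : nat) :=
  exists s : seq T, List.NoDup s /\ m < size s /\ (forall x, List.In x s -> X x).

Definition i3_0 : 'I_3 := @Ordinal 3 0 isT.
Definition i3_1 : 'I_3 := @Ordinal 3 1 isT.
Definition i3_2 : 'I_3 := @Ordinal 3 2 isT.
Definition i2_0 : 'I_2 := @Ordinal 2 0 isT.
Definition i2_1 : 'I_2 := @Ordinal 2 1 isT.
Definition i1_0 : 'I_1 := @Ordinal 1 0 isT.

Record ranked_group := RankedGroup {
  rg_carrier :> Type;
  rg_mul : rg_carrier -> rg_carrier -> rg_carrier;
  rg_inv : rg_carrier -> rg_carrier;
  rg_one : rg_carrier;
  rg_def : forall n, tset rg_carrier n -> Prop;
  rg_rk  : forall n, tset rg_carrier n -> nat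
}.

Arguments rg_def r n _ : clear implicits.
Arguments rg_mul r _ _ : clear implicits.
Arguments rg_inv r _ : clear implicits.
Arguments rg_one r : clear implicits.
Arguments rg_rk r n _ : clear implicits.

Section Defs.
Variable G : ranked_group.
Local Notation mul := (rg_mul G).
Local Notation inv := (rg_inv G).
Local Notation one := (rg_one G).
Local Notation Def := (rg_def G).
Local Notation rk := (rg_rk G).

Definition is_group : Prop :=
  (forall x y z, mul x (mul y z) = mul (mul x y) z) /\
  (forall x, mul one x = x) /\
  (forall x, mul (inv x) x = one).

Definition is_universe : Prop :=
  (forall n, Def n (fun _ => True)) /\
  (forall n (X Y : tset G n), Def n X -> Def n Y -> Def n (fun x => X x /\ Y x)) /\
  (forall n (X : tset G n), Def n X -> Def n (fun x => ~ X x)) /\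
  (forall n m (X : tset G n) (Y : tset G m), Def n X -> Def m Y ->
      Def (n + m) (fun x => X (lpart x) /\ Y (rpart x))) /\
  (forall n m (X : tset G (n + m)), Def (n + m) X ->
      Def n (fun a => exists b, X (tcat a b))) /\
  (forall n m (s : 'I_m -> 'I_n) (X : tset G m), Def m X ->
      Def n (fun x => X (fun i => x (s i)))) /\
  (forall a : G, Def 1 (fun x => x i1_0 = a)) /\
  Def 2 (fun x => x i2_0 = x i2_1) /\
  Def 3 (fun x => mul (x i3_0) (x i3_1) = x i3_2).

Definition def_map n m (A : tset G n) (B : tset G m) (f : ('I_n -> G) -> ('I_m -> G)) :=
  Def n A /\ Def m B /\ (forall a, A a -> B (f a)) /\
  Def (n + m) (fun x => A (lpart x) /\ f (lpart x) = rpart x).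

Definition fiber n m (A : tset G n) (f : ('I_n -> G) -> ('I_m -> G)) (b : 'I_m -> G) :
  tset G n := fun a => A a /\ f a = b.

(* Borovik–Poizat rank axioms (rank defined on nonempty definable sets). *)
Definition rank_axioms : Prop :=
  (forall n (A : tset G n), Def n A -> nonempty A -> forall k,
     k < rk n A <->
     exists Y : nat -> tset G n,
       (forall i, Def n (Y i) /\ nonempty (Y i) /\ (forall x, Y i x -> A x)
                  /\ k <= rk n (Y i)) /\
       (forall i j, i <> j -> forall x, Y i x -> Y j x -> False)) /\
  (forall n m A B f, @def_map n m A B f -> forall k,
     Def m (fun b => B b /\ nonempty (fiber A f b) /\ rk n (fiber A f b) = k)) /\
  (forall n m A B f k, @def_map n m A B f -> nonempty A ->
     (forall b, B b -> nonempty (fiber A f b) /\ rk n (fiber A f b) = k) ->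
     rk n A = rk m B + k) /\
  (forall n m A B f, @def_map n m A B f -> exists M, forall b, B b ->
     (infinite_set (fiber A f b) <-> card_gt (fiber A f b) M)).

Definition finite_Morley_rank_group : Prop :=
  is_group /\ is_universe /\ rank_axioms.

Definition subgroup (H : G -> Prop) : Prop :=
  H one /\ (forall x y, H x -> H y -> H (mul x y)) /\ (forall x, H x -> H (inv x)).

Definition definable_subset (H : G -> Prop) : Prop := Def 1 (fun x => H (x i1_0)).

(* conjugate B^g = g^-1 B g, i.e. x \in B^g iff g x g^-1 \in B *)
Definition conjugate (B : G -> Prop) (g : G) : G -> Prop :=
  fun x => B (mul (mul g x) (inv g)).

Definition malnormal (B : G -> Prop) : Prop :=
  forall g, ~ B g -> forall x, B x -> conjugate B g x -> x = one.

Definition full_frobenius_complement (B : G -> Prop) : Prop :=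
  subgroup B /\ definable_subset B /\ malnormal B /\
  (forall x, exists g, conjugate B g x).

Definition comm (a b : G) : G := mul (mul (mul (inv a) (inv b)) a) b.

Definition derived (H : G -> Prop) : G -> Prop :=
  fun x => forall K, subgroup K ->
    (forall a b, H a -> H b -> K (comm a b)) -> K x.

Definition soluble (H : G -> Prop) : Prop :=
  subgroup H /\ exists n, forall x, iter n derived H x -> x = one.

Definition normal (N : G -> Prop) : Prop :=
  subgroup N /\ forall g x, N x -> N (mul (mul g x) (inv g)).

End Defs.

(* Main.v *)
Require Import Defs.
From HB Require Import structures.
From Stdlib Require Import Classical.
From mathcomp Require Import all_boot all_fingroup all_solvable.
From mathcomp Require Import zify.
From mathcomp Require Import boolp.
Require Import Defs.
Set Implicit Arguments. Unset Strict Implicit. Unset Printing Implicit Defensive.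
Section Count.
Local Open Scope group_scope.

Lemma ar1 (a n c b : nat) : (a + n = c -> 1 < n -> c <= b + a -> b <= 1 -> False)%N.
Proof. lia. Qed.
Lemma ar2 (a1 a2 n1 n2 c d : nat) : (a1 + n1 = c -> 2 * n1 <= c -> a2 + n2 = c -> 2 * n2 <= c -> 1 + (a1 + a2) <= d -> d = c -> False)%N.
Proof. lia. Qed.

Lemma frob_count (gT : finGroupType) (I : Type) (K : I -> {group gT}) :
  (forall x, exists i, x \in K i) ->
  (forall i j y, y != 1 -> y \in K i -> y \in K j -> K i :=: K j) ->
  (forall i h, exists j, K i :^ h = K j) ->
  (forall i h y, y != 1 -> y \in K i -> y ^ h \in K i -> h \in K i) ->
  exists i, K i :=: setT.
Proof.
move=> Hcov Huniq Hconj Hmal.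
case: (boolP [exists x : gT, x != 1]) => [ex|]; last first.
  move/existsPn=> all1; have [i _] := Hcov 1; exists i.
  apply/eqP; rewrite eqEsubset subsetT /=; apply/subsetP=> z _.
  by move: (all1 z); rewrite negbK => /eqP ->; rewrite group1.
case/existsP: ex => x ntx.
have TI: forall i y, y != 1 -> y \in K i -> normedTI (K i)^# setT (K i).
  move=> i y nty Ky; apply/normedTI_memJ_P; split.
  - by apply/set0Pn; exists y; rewrite !inE nty.
  - exact: subsetT.
  move=> a g /setD1P[nta Ka] _; apply/idP/idP.
    by case/setD1P=> _ Kag; apply: Hmal nta Ka Kag.
  by move=> Kg; rewrite !inE groupJ // andbT conjg_eq1.
have cnt: forall i y, y != 1 -> y \in K i -> K i :!=: setT ->
   (#|class_support (K i)^# setT| + #|setT : K i| = #|[set: gT]| /\ 2 * #|setT : K i| <= #|[set: gT]| /\ 2 <= #|setT : K i|)%N.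
  move=> i y nty Ky nKT.
  rewrite (card_support_normedTI (TI _ _ nty Ky)).
  have L : (#|K i| * #|setT : K i| = #|[set: gT]|)%N.
    by rewrite (Lagrange (subsetT (K i))).
  have k2: (1 <= #|(K i)^#|)%N.
    by rewrite card_gt0; apply/set0Pn; exists y; rewrite !inE nty.
  have i2: (2 <= #|setT : K i|)%N.
    rewrite ltnNge; apply: contra nKT => le1.
    rewrite eqEsubset subsetT /= -indexg_eq1; rewrite eqn_leq le1 /=.
    by rewrite indexg_gt0.
  rewrite (cardsD1 1 (K i)) group1 add1n in L.
  move: L k2 i2; set k := #|(K i)^#|; set n := #|setT : K i|; move=> L k2 i2.
  split; nia.
apply: Classical_Prop.NNPP => nex.
have nT: forall i, K i :!=: setT by move=> i; apply/eqP=> E; apply: nex; exists i.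
have [i Kx] := Hcov x.
have [c1 [i1 i1']] := cnt _ _ ntx Kx (nT i).
set S1 := class_support (K i)^# setT in c1.
have: ~~ ([set: gT] \subset 1 |: S1).
  apply/negP=> /subset_leq_card; rewrite cardsU1.
  by move=> H; apply: (ar1 c1 i1' H); apply: leq_b1.
case/subsetPn=> y _; rewrite !inE negb_or => /andP[nty nS1].
have [j Ky] := Hcov y.
have [c2 [i2 i2']] := cnt _ _ nty Ky (nT j).
set S2 := class_support (K j)^# setT in c2.
have n1: forall k, 1 \notin class_support (K k)^# setT.
  move=> k; apply/negP=> /imset2P[a g /setD1P[nta _] _] /esym/eqP.
  by rewrite conjg_eq1; apply/negP.
have disj: [disjoint S1 & S2].
  apply/pred0P => z /=; apply/negbTE/negP=> /andP[/imset2P[a g Ka _ ->] /imset2P[b h Kb _ eq]].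
  case/setD1P: Ka => nta Ka; case/setD1P: Kb => ntb Kb.
  have [i' Ei] := Hconj i g; have [j' Ej] := Hconj j h.
  have E : K i :^ g = K j :^ h.
    rewrite Ei Ej; apply: (Huniq _ _ (a ^ g)); first by rewrite conjg_eq1.
      by rewrite -Ei memJ_conjg.
    by rewrite -Ej eq memJ_conjg.
  have: y ^ h \in K i :^ g by rewrite E memJ_conjg.
  case/imsetP=> c Kc yhc.
  move/negP: nS1; apply; apply/imset2P; exists c (g * h^-1) => //.
    rewrite !inE Kc andbT; apply: contra nty => /eqP c1'.
    by rewrite -(conjg_eq1 y h) yhc c1' conj1g.
  by rewrite conjgM -yhc conjgK.
have := subset_leq_card (subsetT (1 |: (S1 :|: S2))).
rewrite cardsU1 !inE negb_or n1 n1 /= cardsU (disjoint_setI0 disj) cards0 subn0 => H.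
by apply: (ar2 c1 i1 c2 i2 H).
Qed.

End Count.
Section GL.
Variable G : ranked_group.
Hypothesis HG : is_group G.
Local Notation mul := (rg_mul G).
Local Notation inv := (rg_inv G).
Local Notation one := (rg_one G).

Lemma mulA x y z : mul x (mul y z) = mul (mul x y) z. Proof. by case: HG. Qed.
Lemma mul1 x : mul one x = x. Proof. by case: HG => _ []. Qed.
Lemma mulV x : mul (inv x) x = one. Proof. by case: HG => _ []. Qed.
Lemma mulrV x : mul x (inv x) = one.
Proof.
rewrite -{1}(mul1 x) -(mulV (inv x)) -(mulA (inv (inv x)) (inv x) x) mulV.
by rewrite -mulA mul1 mulV.
Qed.
Lemma mulr1 x : mul x one = x.
Proof. by rewrite -(mulV x) mulA mulrV mul1. Qed.
Lemma invK x : inv (inv x) = x.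
Proof. by rewrite -[LHS]mulr1 -(mulV x) mulA mulV mul1. Qed.
Lemma inv_uniq a b : mul a b = one -> inv a = b.
Proof. by move=> E; rewrite -[LHS]mulr1 -E mulA mulV mul1. Qed.
Lemma invM x y : inv (mul x y) = mul (inv y) (inv x).
Proof.
apply: inv_uniq; rewrite -mulA [mul y _]mulA mulrV mul1 mulrV //.
Qed.
Lemma mulI a x y : mul a x = mul a y -> x = y.
Proof. by move=> E; rewrite -[x]mul1 -[y]mul1 -(mulV a) -!mulA E. Qed.

Definition cj a y := mul (mul a y) (inv a).

Lemma mulK a y : mul (inv a) (mul a y) = y. Proof. by rewrite mulA mulV mul1. Qed.
Lemma mulKr a y : mul a (mul (inv a) y) = y. Proof. by rewrite mulA mulrV mul1. Qed.
Lemma inv1 : inv one = one. Proof. by apply: inv_uniq; rewrite mul1. Qed.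

Ltac gsimp := repeat progress rewrite ?inv1 ?invM ?invK -?mulA ?mulK ?mulKr ?mulV ?mulrV ?mul1 ?mulr1.

Lemma cjM a u v : cj a (mul u v) = mul (cj a u) (cj a v). Proof. rewrite /cj; gsimp; done. Qed.
Lemma cjV a u : cj a (inv u) = inv (cj a u). Proof. rewrite /cj; gsimp; done. Qed.
Lemma cjmul a b y : cj (mul a b) y = cj a (cj b y). Proof. rewrite /cj; gsimp; done. Qed.
Lemma cj1 y : cj one y = y. Proof. rewrite /cj; gsimp; done. Qed.
Lemma cjy1 a : cj a one = one. Proof. rewrite /cj; gsimp; done. Qed.
Lemma cjK a y : cj (inv a) (cj a y) = y. Proof. rewrite /cj; gsimp; done. Qed.
Lemma cjKV a y : cj a (cj (inv a) y) = y. Proof. rewrite /cj; gsimp; done. Qed.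
Lemma cj_comm s a b : cj s (comm a b) = comm (cj s a) (cj s b).
Proof. by rewrite /comm !cjM !cjV. Qed.
Lemma cj_eq1 a y : cj a y = one -> y = one.
Proof. by move=> E; rewrite -(cjK a y) E cjy1. Qed.
End GL.

Section FB.
Variable G : ranked_group.
Hypothesis HG : is_group G.
Local Notation mul := (rg_mul G).
Local Notation inv := (rg_inv G).
Local Notation one := (rg_one G).
Variable B : G -> Prop.
Hypothesis HB : full_frobenius_complement B.

Lemma sB : subgroup B. Proof. by case: HB. Qed.
Lemma malB : malnormal B. Proof. by case: HB => _ [_ [H _]]. Qed.
Lemma covB (x : G) : exists g, B (cj g x). Proof. by case: HB => _ [_ [_ H]]; exact: H. Qed.

Lemma B_cj (c y : G) : B c -> B y -> B (cj c y).
Proof. move=> Bc By; have [B1 [Hm Hi]] := sB; rewrite /cj. apply: (Hm); [apply: (Hm)|apply: (Hi)]; done. Qed.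
Lemma B_cj' (c y : G) : B c -> B (cj c y) -> B y.
Proof. by move=> Bc By; rewrite -(cjK HG c y); apply: B_cj => //; have [_ [_ Hi]] := sB; exact: Hi. Qed.

Lemma cj_cj (a b y : G) : cj (cj a b) (cj a y) = cj a (cj b y).
Proof. symmetry; rewrite [cj b y]/cj (cjM HG) (cjM HG) (cjV HG); reflexivity. Qed.

Lemma malC (c b : G) : ~ B c -> B b -> B (cj c b) -> b = one.
Proof. move=> nc Bb Bcb; exact: (malB nc Bb Bcb). Qed.

Lemma keyL (g s x : G) : x <> one -> B (cj g x) -> B (cj g (cj s x)) -> B (cj g s).
Proof.
move=> nx Bx Bsx; apply: NNPP => nB; apply: nx.
apply: (cj_eq1 HG (a := g)); apply: (malC nB Bx).
by rewrite cj_cj.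
Qed.

Lemma uniqB (g g' x : G) : x <> one -> B (cj g x) -> B (cj g' x) ->
  forall z, B (cj g z) <-> B (cj g' z).
Proof.
move=> nx Bx Bx' z.
have Eg : mul (mul g' (inv g)) g = g'.
  by rewrite -(mulA HG) (mulV HG) (mulr1 HG).
have Bc : B (mul g' (inv g)).
  apply: NNPP => nB; apply: nx; apply: (cj_eq1 HG (a := g)).
  by apply: (malC nB Bx); rewrite -(cjmul HG) Eg.
rewrite -Eg (cjmul HG); split; first exact: B_cj.
exact: B_cj'.
Qed.

Lemma conj_sub (g : G) : subgroup (fun x => B (cj g x)).
Proof.
have [B1 [Bm Bi]] := sB; split; first by rewrite (cjy1 HG).
split=> [x y Bx By|x Bx]; first by rewrite (cjM HG); auto.
by rewrite (cjV HG); auto.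
Qed.

Lemma B1 : B one. Proof. by have [] := sB. Qed.

Lemma derived_sub (S : G -> Prop) : subgroup (derived S).
Proof.
split; first by move=> K [K1 _] _.
split=> [x y hx hy K sK hK|x hx K sK hK].
  by have [_ [Km _]] := sK; apply: Km; [apply: hx | apply: hy].
by have [_ [_ Ki]] := sK; apply: Ki; apply: hx.
Qed.

Lemma derived_norm (S : G -> Prop) (s x : G) : subgroup S -> S s -> derived S x -> derived S (cj s x).
Proof.
move=> [S1 [Sm Si]] Ss dx K [K1 [Km Ki]] hK.
apply: (dx (fun y => K (cj s y))).
  split; first by rewrite (cjy1 HG).
  split=> [u v Ku Kv|u Ku]; first by rewrite (cjM HG); apply: Km.
  by rewrite (cjV HG); apply: Ki.
move=> a b Sa Sb; rewrite (cj_comm HG); apply: hK; rewrite /cj; apply: (Sm); try apply: (Sm); auto.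
Qed.

Lemma comm_in (S : G -> Prop) (a b : G) : S a -> S b -> derived S (comm a b).
Proof. by move=> Sa Sb K _ hK; apply: hK. Qed.

Lemma comm_cent (s x : G) : comm (inv s) (inv x) = one -> cj s x = x.
Proof.
rewrite /comm !(invK HG) => E.
by rewrite -(invK HG (cj s x)) (inv_uniq HG E) (invK HG).
Qed.

Lemma solv_in m : forall S : G -> Prop, subgroup S -> (forall x, iter m (@derived G) S x -> x = one) ->
  exists g, forall x, S x -> B (cj g x).
Proof.
elim: m => [|m IH] S sS triv.
  by exists one => x Sx; rewrite (triv x Sx) (cjy1 HG); apply: B1.
have triv' : forall x, iter m (@derived G) (derived S) x -> x = one.
  by move=> x; rewrite -iterSr; exact: triv.
have [g Hg] := IH _ (derived_sub S) triv'.
case: (Classical_Prop.classic (exists x, derived S x /\ x <> one)) => [[x [dx nx]]|nd].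
  exists g => s Ss; apply: (keyL nx (Hg x dx)); apply: Hg; exact: derived_norm.
have [S1 [Sm Si]] := sS.
have cent: forall s x, S s -> S x -> cj s x = x.
  move=> s x Ss Sx; apply: comm_cent; apply: NNPP => ne; apply: nd.
  by exists (comm (inv s) (inv x)); split => //; apply: comm_in; auto.
case: (Classical_Prop.classic (exists x, S x /\ x <> one)) => [[x [Sx nx]]|ns].
  have [g0 Hg0] := covB x; exists g0 => s Ss; apply: (keyL nx Hg0).
  by rewrite (cent s x).
exists one => x Sx; have -> : x = one by apply: NNPP => ?; apply: ns; exists x.
by rewrite (cjy1 HG); apply: B1.
Qed.

End FB.

Section Fin.
Variable G : ranked_group.
Hypothesis HG : is_group G.
Variable H : G -> Prop.
Hypothesis sH : subgroup H.
Variable s : seq G.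
Hypothesis Hs : forall x, H x -> List.In x s.
Variable B : G -> Prop.
Hypothesis HB : full_frobenius_complement B.

Definition sl : seq {classic G} := filter (fun x : {classic G} => `[< H x >]) s.
Lemma inS (x : {classic G}) (t : seq {classic G}) : List.In x t -> x \in t.
Proof.
elim: t => //= a t IH [->|/IH]; rewrite in_cons; first by rewrite eqxx.
by move=> ->; rewrite orbT.
Qed.
Lemma slP (x : {classic G}) : (x \in sl) <-> H x.
Proof.
rewrite mem_filter; split => [/andP[/asboolP //] | hx].
by apply/andP; split; [apply/asboolP | apply: inS; apply: Hs].
Qed.
Definition HT := seq_sub sl.
HB.instance Definition _ := Finite.copy HT (seq_sub sl).
Local Notation mul := (rg_mul G).
Local Notation inv := (rg_inv G).
Local Notation one := (rg_one G).

Lemma vH (u : HT) : H (val u). Proof. exact: (proj1 (slP _) (valP u)). Qed.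
Lemma mkH (x : G) : H x -> (x : {classic G}) \in sl. Proof. exact: (proj2 (slP _)). Qed.

Definition oneT : HT := Sub (one : {classic G}) (mkH (proj1 sH)).
Definition mulT (u v : HT) : HT :=
  Sub (mul (val u) (val v) : {classic G}) (mkH (proj1 (proj2 sH) _ _ (vH u) (vH v))).
Definition invT (u : HT) : HT :=
  Sub (inv (val u) : {classic G}) (mkH (proj2 (proj2 sH) _ (vH u))).
Lemma valM u v : val (mulT u v) = mul (val u) (val v). Proof. by rewrite SubK. Qed.
Lemma valV u : val (invT u) = inv (val u). Proof. by rewrite SubK. Qed.
Lemma val1 : val oneT = one. Proof. by rewrite SubK. Qed.
Lemma mulTA : associative mulT.
Proof. by move=> u v w; apply: val_inj; rewrite !valM; case: HG. Qed.
Lemma mul1T : left_id oneT mulT.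
Proof. by move=> u; apply: val_inj; rewrite valM val1; case: HG => _ []. Qed.
Lemma mulVT : left_inverse oneT invT mulT.
Proof. by move=> u; apply: val_inj; rewrite valM val1 valV; case: HG => _ []. Qed.
HB.instance Definition _ := Finite_isGroup.Build HT mulTA mul1T mulVT.


Definition Kset (g : G) : {set HT} := [set u : HT | `[< B (cj g (val u)) >]].
Lemma Kgroup (g : G) : group_set (Kset g).
Proof.
have [C1 [Cm Ci]] := conj_sub HG HB g.
apply/group_setP; split; first by rewrite inE; apply/asboolP; rewrite val1.
move=> u v; rewrite !inE => /asboolP Bu /asboolP Bv; apply/asboolP.
by rewrite valM; apply: Cm.
Qed.
Definition Kg (g : G) : {group HT} := Group (Kgroup g).

Lemma val_ne1 (y : HT) : y != 1%g -> val y <> one.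
Proof. by move=> ny E; move/eqP: ny; apply; apply: val_inj; rewrite E val1. Qed.

Lemma fin_in : exists g, forall x, H x -> B (cj g x).
Proof.
have [g Eg] : exists g, Kg g :=: setT.
  apply: frob_count.
  - by move=> x; have [g Hg] := covB HB (val x); exists g; rewrite inE; apply/asboolP.
  - move=> g g' y ny; rewrite !inE => /asboolP By /asboolP By'.
    apply/setP=> z; rewrite !inE.
    apply/idP/idP => /asboolP Bz; apply/asboolP; move: Bz;
     by have := uniqB HG HB (val_ne1 ny) By By' (val z) => -[].
  - move=> g h; exists (mul g (val h)); apply/setP=> z; rewrite mem_conjg !inE.
    rewrite /conjg !valM !valV (invK HG) (cjmul HG).
    suff -> : mul (val h) (mul (val z) (inv (val h))) = cj (val h) (val z) by [].
    by rewrite /cj (mulA HG).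
  - move=> g h y ny; rewrite !inE => /asboolP By /asboolP Byh; apply/asboolP.
    have E : val (y ^ h)%g = cj (inv (val h)) (val y).
      by rewrite /conjg !valM !valV /cj (invK HG) (mulA HG).
    rewrite E in Byh.
    have := keyL HG HB (val_ne1 ny) By Byh.
    rewrite (cjV HG) => Bi.
    by have := (proj2 (proj2 (sB HB))) _ Bi; rewrite (invK HG).
exists g => x Hx.
have : (Sub (x : {classic G}) (mkH Hx) : HT) \in Kg g by rewrite Eg inE.
by rewrite inE SubK => /asboolP.
Qed.
End Fin.

Theorem mainTheorem2 (G : ranked_group) (HG : finite_Morley_rank_group G)
  (B : G -> Prop) (HB : full_frobenius_complement B) (Hproper : exists x : G, ~ B x) :
  (forall H : G -> Prop, subgroup H -> finite_set H ->
     exists g : G, forall x, H x -> conjugate B g x) /\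
  (forall H : G -> Prop, soluble H ->
     exists g : G, forall x, H x -> conjugate B g x) /\
  (forall N : G -> Prop, normal N -> finite_set N -> forall x, N x -> x = rg_one G) /\
  (forall N : G -> Prop, normal N -> soluble N -> forall x, N x -> x = rg_one G).
Proof.
have [HG' _] := HG.
have part1 : forall H : G -> Prop, subgroup H -> finite_set H ->
     exists g : G, forall x, H x -> conjugate B g x.
  move=> H sH [s Hs]; exact: (fin_in HG' sH Hs HB).
have part2 : forall H : G -> Prop, soluble H ->
     exists g : G, forall x, H x -> conjugate B g x.
  move=> H [sH [n Hn]]; exact: (solv_in HG' HB sH Hn).
have key : forall N : G -> Prop, normal N -> (exists g : G, forall x, N x -> conjugate B g x) ->
    forall x, N x -> x = rg_one G.
  move=> N [sN nN] [g Hg] x Nx; apply: NNPP => nx.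
  have [y ny] := Hproper; apply: ny.
  have : B (cj g (cj (rg_inv G g) y)).
    apply: (keyL HG' HB nx (Hg _ Nx)); apply: Hg; exact: nN.
  by rewrite (cjKV HG').
split; first exact: part1.
split; first exact: part2.
split.
  by move=> N hN fN; apply: (key N hN); apply: part1 (proj1 hN) fN.
by move=> N hN sN; apply: (key N hN); apply: part2.
Qed.
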